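(* Let $f:\{0,1\}^n\to\{0,1\}$ be a function that is not identically 1, and suppose $f$ has $k$ minimal 1-certificates $c_1,\dots,c_k$ that are pairwise non-overlapping and such that for each $i$, the total number of contradictions between $c_i$ and all the other $c_j$ ($j\neq i$) together is at most 2. Then $s_0(f)\ge k$.
   Context: A 1-certificate is a partial assignment $c:S\to\{0,1\}$, $S\subseteq[n]$, such that $f(y)=1$ for every $y\in\{0,1\}^n$ agreeing with $c$ on $S$; it is minimal if no restriction of $c$ to a proper subset of $S$ is a 1-certificate. The number of contradictions between two partial assignments is the number of positions where one assigns 1 and the other assigns 0; two partial assignments overlap if there is a position to which both assign the same value. $s_0(f)=\max\{|\{i: f(x^{\{i\}})\ne f(x)\}| : f(x)=0\}$, where $x^{\{i\}}$ is $x$ with bit $i$ flipped. *)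

(* Defs.v *)
From mathcomp Require Import all_boot all_order.
Set Implicit Arguments. Unset Strict Implicit. Unset Printing Implicit Defensive.

(* Inputs x in {0,1}^n are finite functions 'I_n -> bool (true = 1).
   A partial assignment c : S -> {0,1}, S a subset of [n], is encoded as
   c : {ffun 'I_n -> option bool} with S = {i | c i <> None}. *)

Definition input n := {ffun 'I_n -> bool}.
Definition passign n := {ffun 'I_n -> option bool}.

Definition pdom n (c : passign n) : {set 'I_n} := [set i | c i != None].

Definition agrees n (c : passign n) (y : input n) : bool :=
  [forall i, if c i is Some b then y i == b else true].

Definition one_cert n (f : input n -> bool) (c : passign n) : bool :=
  [forall y : input n, agrees c y ==> f y].

Definition restrict n (c : passign n) (T : {set 'I_n}) : passign n :=
  [ffun i => if i \in T then c i else None].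

Definition min_one_cert n (f : input n -> bool) (c : passign n) : bool :=
  one_cert f c &&
  [forall T : {set 'I_n}, (T \proper pdom c) ==> ~~ one_cert f (restrict c T)].

Definition ncontra n (c d : passign n) : nat :=
  #|[set i : 'I_n | [|| (c i == Some true) && (d i == Some false)
                     | (c i == Some false) && (d i == Some true)]]|.

Definition overlap n (c d : passign n) : bool :=
  [exists i : 'I_n, [exists b : bool, (c i == Some b) && (d i == Some b)]].

Definition flip n (x : input n) (i : 'I_n) : input n :=
  [ffun j => if j == i then ~~ x j else x j].

Definition sens n (f : input n -> bool) (x : input n) : nat :=
  #|[set i : 'I_n | f (flip x i) != f x]|.

(* s_0(f) = max sensitivity over 0-inputs (0 if there is none) *)
Definition s0 n (f : input n -> bool) : nat :=
  \max_(x : input n | ~~ f x) sens f x.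

(* Main.v *)
Require Import Defs.
From mathcomp Require Import all_boot all_order.
Set Implicit Arguments. Unset Strict Implicit. Unset Printing Implicit Defensive.

Definition cagr (o : option bool) (b : bool) : bool :=
  if o is Some b' then b == b' else true.

Definition bad n k (c : 'I_k -> passign n) (t : 'I_n -> bool) (v : 'I_k)
  (Q : {set 'I_n}) : nat := #|[set p in Q | ~~ cagr (c v p) (t p)]|.
Definition shc n k (c : 'I_k -> passign n) (v : 'I_k) (Q : {set 'I_n}) : nat :=
  #|[set p in Q | c v p != None]|.
Definition Sh n k (c : 'I_k -> passign n) : {set 'I_n} :=
  [set p | [exists w, exists w', (w != w') && (c w p != None) && (c w' p != None)]].

Lemma cardQ n (Q : {set 'I_n}) (P : pred 'I_n) e : e \in Q ->
  #|[set p in Q | P p]| = P e + #|[set p in Q :\ e | P p]|.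
Proof.
move=> eQ; rewrite (cardsD1 e) inE eQ /=; congr (_ + _); apply: eq_card => p.
by rewrite !inE; case: (p == e).
Qed.

Lemma bad_le_shc n k (c : 'I_k -> passign n) t v Q : bad c t v Q <= shc c v Q.
Proof.
apply: subset_leq_card; apply/subsetP => p; rewrite !inE.
by case/andP=> -> /=; case: (c v p).
Qed.

Lemma no_ov n k (c : 'I_k -> passign n) i j p b :
  (forall i j, i != j -> ~~ overlap (c i) (c j)) ->
  i != j -> c i p = Some b -> c j p = Some b -> False.
Proof.
move=> NO ij ci cj; move: (NO _ _ ij) => /negP; apply; apply/existsP; exists p.
by apply/existsP; exists b; rewrite ci cj eqxx.
Qed.

Lemma no3 n k (c : 'I_k -> passign n) x y v p bx :
  (forall i j, i != j -> ~~ overlap (c i) (c j)) ->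
  x != y -> c x p = Some bx -> c y p != None -> v != x -> v != y -> c v p = None.
Proof.
move=> NO xy cx; case cy: (c y p) => [b|] // _ vx vy.
case cv: (c v p) => [bv|] //; exfalso.
have bxy : b = ~~ bx.
  by case: b bx cy cx {cv} => [] [] cy cx //; exfalso; apply: (no_ov NO xy cx cy).
case: bv cv => cv; case: bx cx bxy => cx bxy; subst b.
- by apply: (no_ov NO vx cv cx).
- by apply: (no_ov NO vy cv cy).
- by apply: (no_ov NO vy cv cy).
- by apply: (no_ov NO vx cv cx).
Qed.

Lemma Lt n k (c : 'I_k -> passign n) :
  (forall i j, i != j -> ~~ overlap (c i) (c j)) ->
  (forall v, shc c v (Sh c) <= 2) ->
  forall m (Q : {set 'I_n}) a, #|Q| = m -> Q \subset Sh c ->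
  exists t, (forall v, bad c t v Q <= 1) /\ bad c t a Q <= (shc c a Q).-1.
Proof.
move=> NO H2; elim=> [|m IH] Q a cQ QS.
  have h v : bad c (fun _ => false) v Q = 0.
    apply/eqP; rewrite -leqn0 -cQ; apply/subset_leq_card/subsetP=> p.
    by rewrite inE; case/andP.
  by exists (fun _ => false); split=> [v|]; rewrite h.
have [e [eQ He]] : exists e, e \in Q /\ (shc c a Q != 0 -> c a e != None).
  case: (pickP [pred p | (p \in Q) && (c a p != None)]) => [e /andP[eQ ce]|none].
    by exists e.
  have /card_gt0P[e eQ] : 0 < #|Q| by rewrite cQ.
  exists e; split=> // H; exfalso; move: H; rewrite /shc.
  rewrite -lt0n; case/card_gt0P => p; rewrite inE => pp.
  by move: (none p) => /=; rewrite pp.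
have eSh : e \in Sh c by apply: (subsetP QS).
have [x [y [xy [cxe [cye xa]]]]] : exists x y, x != y /\ c x e != None /\
    c y e != None /\ (c a e != None -> x = a).
  move: eSh; rewrite inE => /existsP[w /existsP[w' /andP[/andP[ww cw] cw']]].
  case cae: (c a e != None).
    case: (eqVneq w a) => wa.
      by exists a, w'; subst w; do !split=> //; rewrite eq_sym.
    by exists a, w; do !split=> //; rewrite eq_sym.
  by exists w, w'.
case cx: (c x e) cxe => [bx|] // _.
have cQ' : #|Q :\ e| = m by move: cQ; rewrite (cardsD1 e) eQ add1n => -[].
have QS' : Q :\ e \subset Sh c by apply: subset_trans QS; apply: subsetDl.
have [t' [Ht1 Ht2]] := IH (Q :\ e) y cQ' QS'.
have cy3 : c y e = Some (~~ bx).
  case cyy: (c y e) cye => [b|] // _; congr Some.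
  case: b bx cx cyy => [] [] cx cyy //; exfalso;
    by apply: (no_ov NO xy cx cyy).
pose t := fun p => if p == e then bx else t' p.
have badE v : bad c t v Q = ~~ cagr (c v e) bx + bad c t' v (Q :\ e).
  rewrite /bad (cardQ _ eQ) /t eqxx; congr (_ + _); apply: eq_card => p.
  by rewrite !inE; case: (p == e).
have shE v : shc c v Q = (c v e != None) + shc c v (Q :\ e).
  by rewrite /shc (cardQ _ eQ).
have shQ v : shc c v Q <= 2.
  apply: leq_trans (H2 v); apply/subset_leq_card/subsetP => p.
  by rewrite inE => /andP[/(subsetP QS) pS cp]; rewrite inE pS cp.
exists t; split=> [v|].
  case: (eqVneq v x) => [->|vx].
    by rewrite badE cx /= eqxx add0n; apply: Ht1.
  case: (eqVneq v y) => [->|vy].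
    have nb : (bx == ~~ bx) = false by case: (bx).
    rewrite badE cy3 /= nb add1n ltnS.
    have := shQ y; rewrite shE cy3 /= add1n ltnS => sy.
    apply: leq_trans Ht2 _; move: sy; case: (shc c y (Q :\ e)) => [|[]] //.
  by rewrite badE (no3 NO xy cx cye vx vy) /= add0n; apply: Ht1.
case: (boolP (c a e != None)) => cae.
  move: (xa cae) => xa'; subst x.
  by rewrite badE cx /= eqxx add0n shE cae add1n /=; apply: bad_le_shc.
have s0 : shc c a Q = 0 by apply/eqP; apply: contraNT cae; apply: He.
by have := bad_le_shc c t a Q; rewrite s0.
Qed.

Lemma sum_ind n (A C : {set 'I_n}) : \sum_(p in A) (p \in C) <= #|C|.
Proof.
rewrite -big_mkcondr /= sum1_card; apply/subset_leq_card/subsetP=> p.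
by rewrite unfold_in /= => /andP[].
Qed.

Lemma H2of n k (c : 'I_k -> passign n) :
  (forall i j, i != j -> ~~ overlap (c i) (c j)) ->
  forall v, shc c v (Sh c) <= \sum_(j < k | j != v) ncontra (c v) (c j).
Proof.
move=> NO v; rewrite /shc -sum1_card.
pose C j := [set i : 'I_n | [|| (c v i == Some true) && (c j i == Some false)
                     | (c v i == Some false) && (c j i == Some true)]].
apply: (@leq_trans (\sum_(p in [set p in Sh c | c v p != None])
                      \sum_(j < k | j != v) (p \in C j))).
  apply: leq_sum => p; rewrite !inE => /andP[].
  move=> /existsP[w /existsP[w' /andP[/andP[ww cw] cw']]] cv.
  have [z [zv cz]] : exists z, z != v /\ c z p != None.
    case: (eqVneq w v) => [e|wv]; last by exists w.
    by exists w'; subst w; rewrite eq_sym.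
  rewrite (bigD1 z) //=; suff -> : p \in C z by [].
  rewrite inE; case czp: (c z p) cz => [bz|] // _.
  case cvp: (c v p) cv => [bv|] // _.
  have : bv != bz by apply/negP => /eqP E; subst bz; apply: (no_ov NO zv czp cvp).
  by case: bv bz {cvp czp} => [] [].
rewrite exchange_big /=; apply: leq_sum => j _; exact: sum_ind.
Qed.

Lemma target n k (c : 'I_k -> passign n) (a : 'I_k) :
  (forall i j, i != j -> ~~ overlap (c i) (c j)) ->
  (forall i, \sum_(j < k | j != i) ncontra (c i) (c j) <= 2) ->
  exists tt : 'I_n -> bool, forall v, #|[set p | ~~ cagr (c v p) (tt p)]| <= 1.
Proof.
move=> NO HC.
have H2 v : shc c v (Sh c) <= 2 by apply: leq_trans (H2of NO v) (HC v).
have [ts [Hts _]] := Lt NO H2 a (erefl #|Sh c|) (subxx _).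
exists (fun p => if p \in Sh c then ts p else
          if [pick w | c w p != None] is Some w then odflt false (c w p) else false).
move=> v; apply: leq_trans (Hts v); apply/subset_leq_card/subsetP => p.
rewrite inE; case: (boolP (p \in Sh c)) => pS /=.
  by move=> H; rewrite inE pS.
case: pickP => [w /= cw|none].
  case: (eqVneq w v) => [->|wv].
    by case: (c v p) => [b|] //=; rewrite eqxx.
  case cv: (c v p) => [b|] //= _; exfalso; move/negP: pS; apply.
  by rewrite inE; apply/existsP; exists w; apply/existsP; exists v; rewrite wv cw cv.
by case cv: (c v p) => [b|] //=; move: (none v) => /=; rewrite cv.
Qed.

Lemma flipE n (x : input n) i j : flip x i j = if j == i then ~~ x j else x j.
Proof. by rewrite /flip ffunE. Qed.

Theorem lemma4 (n k : nat) (f : input n -> bool) (c : 'I_k -> passign n) :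
  (exists x : input n, f x = false) ->
  (forall i, min_one_cert f (c i)) ->
  (forall i j, i != j -> ~~ overlap (c i) (c j)) ->
  (forall i, \sum_(j < k | j != i) ncontra (c i) (c j) <= 2) ->
  k <= s0 f.
Proof.
move=> [x0 fx0] Hmin NO HC.
case: k c Hmin NO HC => [//|k'] c Hmin NO HC.
have [tt Htt] := target ord0 NO HC.
pose dist (y : input n) := #|[set p | y p != tt p]|.
have fx0' : ~~ f x0 by rewrite fx0.
case: (@arg_minnP _ x0 (fun x => ~~ f x) dist fx0') => y fy ymin.
have key v : exists p, (~~ cagr (c v p) (y p)) && (f (flip y p) != f y).
  have oc : one_cert f (c v) by case/andP: (Hmin v).
  have agr (y' : input n) : [forall i, cagr (c v i) (y' i)] -> f y' = true.
    by move=> H; move/forallP: oc => /(_ y') /implyP; apply; exact: H.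
  have ny : f y = false by apply/negbTE.
  pose D := [set p | ~~ cagr (c v p) (y p)].
  case: (boolP [exists p in D, cagr (c v p) (tt p)]).
    case/existsP => p /andP[pD0 ct].
    have pD : ~~ cagr (c v p) (y p) by move: pD0; rewrite inE.
    exists p; rewrite pD /=.
    have ypt : y p != tt p.
      by move: ct pD; case: (c v p) => //= b /eqP ->.
    rewrite ny; apply/negP => /eqP/negbT fp.
    have := ymin _ fp; rewrite /dist.
    suff -> : [set q | flip y p q != tt q] = [set q | y q != tt q] :\ p.
      move=> H; have := cardsD1 p [set q | y q != tt q]; rewrite inE ypt => E.
      by move: H; rewrite E add1n ltnn.
    apply/setP => q; rewrite !inE flipE; case: (eqVneq q p) => [->|] //=.
    by move: ypt; case: (y p); case: (tt p).
  move/existsPn => Hn.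
  have cD : #|D| <= 1.
    apply: leq_trans (Htt v); apply/subset_leq_card/subsetP => p pD.
    by move: (Hn p); rewrite pD inE.
  have [p0 p0D] : exists p0, p0 \in D.
    apply/card_gt0P; rewrite lt0n; apply/negP => /eqP /cards0_eq D0.
    suff : f y = true by rewrite ny.
    apply: agr; apply/forallP => i; apply/negPn/negP => Hi.
    have : i \in D by rewrite inE.
    by rewrite D0 inE.
  exists p0; rewrite (_ : ~~ _ = true) ?ny; last by move: p0D; rewrite inE.
  rewrite agr //; apply/forallP => i; rewrite flipE.
  case: (eqVneq i p0) => [->|ip].
    by move: p0D; rewrite inE; case: (c v p0) => //= b; case: b; case: (y p0).
  apply/negPn/negP => iD; move/card_le1_eqP: cD => E.
  have : i = p0 by apply: E => //; rewrite inE.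
  by move/eqP: ip.
pose g v := xchoose (key v).
have gP v : (~~ cagr (c v (g v)) (y (g v))) && (f (flip y (g v)) != f y) := xchooseP (key v).
have ginj : injective g.
  move=> v w E; apply/eqP/negPn/negP => vw.
  have := gP v; have := gP w; rewrite -E.
  case/andP => cw _; case/andP => cv _.
  move: cv cw; case cv: (c v (g v)) => [bv|] //=; case cw: (c w (g v)) => [bw|] //=.
  move=> /negbTE hv /negbTE hw.
  have ebw : bv = bw by case: bv bw hv hw {cv cw} => [] []; case: (y (g v)).
  by subst bw; apply: (no_ov NO vw cv cw).
apply: leq_trans (leq_bigmax_cond _ (fy : (fun x => ~~ f x) y)).
rewrite /sens -[X in X <= _](card_ord k'.+1) -(card_imset _ ginj).
apply/subset_leq_card/subsetP => p /imsetP[v _ ->]; rewrite inE.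
by case/andP: (gP v).
Qed.
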